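(* $\displaystyle\lim_{n\to\infty}\frac{l(8n+4)}{l(8n+3)}=\frac{257}{85}.$
   Context: For $n\ge 0$, $c(n)=\sum_{i=0}^{n}\left(\binom{n}{i}\bmod 2\right)2^{i}$, the integer whose binary digits form the $n$-th row of Pascal's triangle modulo $2$; one has $c(2n)\equiv1\pmod4$, and $l(n)=\frac{c(2n)-1}{4}$. (Stated in the paper as a conjecture of R. Stephan and proved there.) *)

(* Defs.v *)
From Stdlib Require Import Reals.
From mathcomp Require Import all_boot.


Definition c (n : nat) : nat := \sum_(0 <= i < n.+1) ('C(n, i) %% 2) * 2 ^ i.

(* l(n) = (c(2n) - 1)/4 ; exact division since c(2n) = 1 mod 4 *)
Definition l (n : nat) : nat := (c n.*2 - 1) %/ 4.

(* Main.v *)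
Require Import Defs.
From Stdlib Require Import Reals.
From mathcomp Require Import all_boot.
From Stdlib Require Import Lra Lia Psatz.
From mathcomp Require Import zify.

Definition cb (b n : nat) : nat := \sum_(0 <= i < n.+1) odd 'C(n, i) * b ^ i.

Lemma c_cb n : c n = cb 2 n.
Proof. by apply: eq_bigr => i _; rewrite modn2. Qed.

Lemma bin_par n : forall k, odd 'C(n.*2, k.*2) = odd 'C(n, k) /\ odd 'C(n.*2, (k.*2).+1) = false.
Proof.
elim: n => [|n IH] k.
  by case: k => [|k] //=; rewrite !bin0n.
have E : n.+1.*2 = (n.*2).+2 by rewrite doubleS.
rewrite E; split.
  case: k => [|j]; first by rewrite !bin0.
  rewrite doubleS !binS !oddD (proj1 (IH j)) (proj2 (IH j)) -doubleS (proj1 (IH j.+1)).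
  by case: (odd 'C(n, j)); case: (odd 'C(n, j.+1)).
case: k => [|j].
  by rewrite /= !bin1 /= odd_double.
rewrite doubleS !binS !oddD (proj2 (IH j)) (proj2 (IH j.+1)) -!doubleS (proj1 (IH j.+1)).
by case: (odd 'C(n, j.+1)).
Qed.

Lemma bin_par_odd n k : odd 'C((n.*2).+1, k.*2) = odd 'C(n, k) /\
   odd 'C((n.*2).+1, (k.*2).+1) = odd 'C(n, k).
Proof.
case: k => [|j]; first by rewrite /= !bin0 bin1 /= odd_double.
rewrite doubleS !binS -doubleS !oddD (proj2 (bin_par n j)) (proj1 (bin_par n j.+1))
  (proj2 (bin_par n j.+1)).
by case: (odd 'C(n, j.+1)).
Qed.

Lemma cb_ext b n N : n < N -> cb b n = \sum_(0 <= i < N) odd 'C(n, i) * b ^ i.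
Proof.
move=> H; rewrite /cb [RHS](big_cat_nat _ (n:=n.+1)) //=.
rewrite [X in _ = _ + X]big1_seq ?addn0 // => i /andP [_]; rewrite mem_index_iota => /andP [Hi _].
by rewrite bin_small.
Qed.

Lemma sum_split (f : nat -> nat) N :
  \sum_(0 <= i < N.*2) f i = \sum_(0 <= i < N) (f i.*2 + f (i.*2).+1).
Proof.
elim: N => [|N IH]; first by rewrite !big_geq.
by rewrite doubleS !big_nat_recr //= IH addnA.
Qed.

Lemma cb_even b n : cb b n.*2 = cb (b * b) n.
Proof.
rewrite (@cb_ext b _ (n.+1).*2); last by rewrite doubleS; lia.
rewrite sum_split /cb; apply: eq_bigr => i _.
rewrite (proj1 (bin_par n i)) (proj2 (bin_par n i)) mul0n addn0.
by rewrite -mul2n expnM.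
Qed.

Lemma cb_odd b n : cb b (n.*2).+1 = (1 + b) * cb (b * b) n.
Proof.
rewrite (@cb_ext b _ (n.+1).*2); last by rewrite doubleS; lia.
rewrite sum_split /cb big_distrr; apply: eq_bigr => i _ /=.
rewrite (proj1 (bin_par_odd n i)) (proj2 (bin_par_odd n i)).
change (b * b) with (b ^ 2); rewrite expnS -!mul2n !expnM; case: (odd 'C(n, i)).
  by rewrite !mul1n mulnDl mul1n.
by rewrite !mul0n muln0.
Qed.

Lemma cb_mod4 B m : 4 %| B -> exists t, cb B m = 1 + t * 4.
Proof.
move=> H; rewrite /cb big_nat_recl // bin0 /= expn0 mul1n.
have : 4 %| \sum_(0 <= i < m) odd 'C(m, i.+1) * B ^ i.+1.
  apply: dvdn_sum => i _; apply: dvdn_mull; rewrite expnS; exact: (dvdn_mulr _ H).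
by case/dvdnP => t ->; exists t.
Qed.

Lemma cb_ge B m : 1 < B -> m < cb B m.
Proof.
move=> H; rewrite /cb big_nat_recr //= binn /= mul1n.
apply: leq_trans (ltn_expl m H) _; exact: leq_addl.
Qed.

Lemma key m : exists Q, m < Q /\ 4 * l (8 * m + 4) + 1 = 257 * Q /\
   4 * l (8 * m + 3) + 1 = 85 * Q.
Proof.
set B := 2 * 2 * (2 * 2) * (2 * 2 * (2 * 2)) * (2 * 2 * (2 * 2) * (2 * 2 * (2 * 2))).
have E4 : c (8 * m + 4).*2 = 257 * cb B m.
  rewrite c_cb cb_even.
  have -> : 8 * m + 4 = (4 * m + 2).*2 by lia.
  rewrite cb_even.
  have -> : 4 * m + 2 = (m.*2).+1.*2 by lia.
  by rewrite cb_even cb_odd.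
have E3 : c (8 * m + 3).*2 = 85 * cb B m.
  rewrite c_cb cb_even.
  have -> : 8 * m + 3 = (4 * m + 1).*2.+1 by lia.
  rewrite cb_odd.
  have -> : 4 * m + 1 = (m.*2).*2.+1 by lia.
  by rewrite cb_odd cb_even mulnA.
have HB : 4 %| B by rewrite /B; do 2! apply: dvdn_mulr.
have [t Ht] := cb_mod4 B m HB.
exists (cb B m); split; first by apply: cb_ge; rewrite /B.
rewrite /l E4 E3 Ht.
have -> : 257 * (1 + t * 4) - 1 = (64 + 257 * t) * 4 by lia.
have -> : 85 * (1 + t * 4) - 1 = (21 + 85 * t) * 4 by lia.
rewrite !mulnK //; lia.
Qed.

Section RealPart.
Local Open Scope R_scope.
Lemma real_bound (x eps : R) (N : nat) : INR N * eps > 1 -> INR N < x -> eps > 0 ->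
  Rabs ((257 * x - 1) / 4 / ((85 * x - 1) / 4) - IZR 257 / IZR 85) < eps.
Proof.
move=> HN HxN Heps.
have HN0 : 0 <= INR N by apply: pos_INR.
have HN1 : 1 <= INR N.
  case: N HN HN0 HxN => [|N] HN HN0 HxN; first by rewrite /= in HN; lra.
  apply: (le_INR 1); apply/leP; by [].
have Hx1 : 1 < x by lra.
have -> : (257 * x - 1) / 4 / ((85 * x - 1) / 4) - IZR 257 / IZR 85 =
          172 / (85 * (85 * x - 1)).
  field; lra.
rewrite Rabs_right; last first.
  apply: Rle_ge; apply: Rlt_le; apply: Rdiv_lt_0_compat; lra.
have Hd : 0 < 85 * (85 * x - 1) by lra.
have -> : 172 / (85 * (85 * x - 1)) = eps - (eps * (85 * (85 * x - 1)) - 172) / (85 * (85 * x - 1)).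
  field; lra.
have : 0 < (eps * (85 * (85 * x - 1)) - 172) / (85 * (85 * x - 1)).
  apply: Rdiv_lt_0_compat => //; nra.
lra.
Qed.
Lemma inr_l a b q : (4 * a + 1 = b * q)%nat -> INR a = (INR b * INR q - 1) / 4.
Proof.
move=> H; have := f_equal INR H; rewrite !plus_INR !mult_INR.
rewrite /= ; lra.
Qed.
End RealPart.

Theorem mainTheorem12 :
  Un_cv (fun n : nat => Rdiv (INR (l (8 * n + 4))) (INR (l (8 * n + 3))))
        (Rdiv (IZR 257) (IZR 85)).
Proof.
move=> eps Heps.
have [N HN] := INR_archimed eps 1 Heps.
exists N => n Hn.
have [Q [HQ [H4 H3]]] := key n.
rewrite /R_dist (inr_l _ _ _ H4) (inr_l _ _ _ H3).
have I257 : INR 257 = IZR 257 by rewrite INR_IZR_INZ.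
have I85 : INR 85 = IZR 85 by rewrite INR_IZR_INZ.
rewrite I257 I85.
apply: (real_bound _ _ N) => //.
apply: lt_INR; move/ltP: HQ => HQ; lia.
Qed.
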